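(* Let $(V,\mathcal H,\iota,W)$ be a generalized functional theory and let $\rho\in V^*$ be a pure-state $v$-representable density. If $\rho$ is a regular value of the smooth map $\iota^*|_{\mathcal P}:\mathcal P\to\mathrm{aff}(\iota^*(\mathcal P))$, then $\rho$ is uniquely $v$-representable.
   Context: A generalized functional theory is a tuple $(V,\mathcal H,\iota,W)$ with $V$ a finite-dimensional real vector space, $\mathcal H$ a finite-dimensional complex Hilbert space, $\iota:V\to i\mathfrak u(\mathcal H)$ a linear map into the Hermitian operators, and $W$ Hermitian. Density operators are regarded as elements of $(i\mathfrak u(\mathcal H))^*$ via the trace pairing; $\iota^*$ is the dual map. $\mathcal P$, the set of pure states (rank-one projectors), is a smooth manifold (identified with projective space). For $v\in V$, $\mathbf G_p(v)$ is the set of pure ground states of $\iota(v)+W$. A density $\rho$ is pure-state $v$-representable if $\rho\in\iota^*(\mathbf G_p(v))$ for some $v\in V$; it is uniquely $v$-representable if moreover every $v'\in V$ with $\rho\in\iota^*(\mathbf G_p(v'))$ satisfies $\iota(v')-\iota(v)\propto\mathbb 1$. A point $q$ is a regular value of a smooth map $f$ if the derivative of $f$ is surjective at every point of $f^{-1}(q)$ (vacuously so if $q\notin\mathrm{im} f$). *)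

(* Defs.v *)
From HB Require Import structures.
From mathcomp Require Import all_boot all_order all_algebra.
From mathcomp Require Import complex.
From mathcomp Require Import reals.
Set Implicit Arguments. Unset Strict Implicit. Unset Printing Implicit Defensive.
Import Order.TTheory GRing.Theory Num.Theory.
Local Open Scope ring_scope.
Local Open Scope complex_scope.

(* Conventions.
   - The real vector space V is R^m, elements are row vectors v : 'rV[R]_m
     (every finite-dimensional real vector space is of this form after a
     choice of basis).
   - The Hilbert space H is C^n (C = R[i]) with the standard inner product
     <x,y> = x^dagger y; states are column vectors 'cV[C]_n.
   - The linear map iota : V -> iu(H) is given by its values on the standard
     basis, a family A : 'I_m -> 'M[C]_n of Hermitian matrices:
        iota v = \sum_k v_k A_k.
   - Densities rho in V^* are represented by their coordinates
     rho_k = rho(e_k), so V^* = 'rV[R]_m and the dual map is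
        iota^*(Gamma)_k = tr (A_k Gamma)  (a real number for Hermitian Gamma;
        we take the real part). *)

Section GFT.
Variable R : realType.
Local Notation C := (R[i]).

Definition adj (p q : nat) (M : 'M[C]_(p, q)) : 'M[C]_(q, p) :=
  (map_mx (@conjc R) M)^T.

Definition is_hermitian (n : nat) (M : 'M[C]_n) : Prop := adj M = M.

Definition proj (n : nat) (psi : 'cV[C]_n) : 'M[C]_n := psi *m adj psi.

Definition unit_vec (n : nat) (psi : 'cV[C]_n) : Prop := adj psi *m psi = 1.

Definition pure_state (n : nat) (G : 'M[C]_n) : Prop :=
  exists psi : 'cV[C]_n, unit_vec psi /\ G = proj psi.

Definition iota (m n : nat) (A : 'I_m -> 'M[C]_n) (v : 'rV[R]_m) : 'M[C]_n :=
  \sum_(k < m) (v 0 k)%:C *: A k.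

Definition iota_star (m n : nat) (A : 'I_m -> 'M[C]_n) (G : 'M[C]_n)
  : 'rV[R]_m := \row_(k < m) complex.Re (\tr (A k *m G)).

Definition pure_ground_state (n : nat) (H G : 'M[C]_n) : Prop :=
  exists (psi : 'cV[C]_n) (lam : C),
    [/\ unit_vec psi, G = proj psi, H *m psi = lam *: psi &
        forall (mu : C) (phi : 'cV[C]_n), phi != 0 -> H *m phi = mu *: phi ->
          lam <= mu].

Definition represents (m n : nat) (A : 'I_m -> 'M[C]_n) (W : 'M[C]_n)
  (rho : 'rV[R]_m) (v : 'rV[R]_m) : Prop :=
  exists G : 'M[C]_n, pure_ground_state (iota A v + W) G /\ rho = iota_star A G.

Definition pure_v_representable (m n : nat) (A : 'I_m -> 'M[C]_n)
  (W : 'M[C]_n) (rho : 'rV[R]_m) : Prop :=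
  exists v, represents A W rho v.

Definition uniquely_v_representable (m n : nat) (A : 'I_m -> 'M[C]_n)
  (W : 'M[C]_n) (rho : 'rV[R]_m) : Prop :=
  exists v, represents A W rho v /\
    forall v', represents A W rho v' ->
      exists c : C, iota A v' - iota A v = c%:M.

(* The direction (linear) space of aff(iota^*(P)): the linear span of all
   differences iota^*(G1) - iota^*(G2), G1, G2 in P; it is the tangent space
   of the affine subspace aff(iota^*(P)) at each of its points. *)
Definition aff_direction (m n : nat) (A : 'I_m -> 'M[C]_n) (x : 'rV[R]_m)
  : Prop :=
  exists (k : nat) (c : 'I_k -> R) (G1 G2 : 'I_k -> 'M[C]_n),
    (forall i, pure_state (G1 i) /\ pure_state (G2 i)) /\
    x = \sum_(i < k) c i *: (iota_star A (G1 i) - iota_star A (G2 i)).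

(* Tangent space of the embedded submanifold P of the Hermitian operators at
   the point |psi><psi| (psi a unit vector):
     T P = { |phi><psi| + |psi><phi| : <psi,phi> = 0 }. *)
Definition tangent_vec (n : nat) (psi : 'cV[C]_n) (X : 'M[C]_n) : Prop :=
  exists phi : 'cV[C]_n, adj psi *m phi = 0 /\
    X = phi *m adj psi + psi *m adj phi.

(* Since iota^* is (real-)linear, its derivative along P is
   iota^* restricted to the tangent space of P. *)
Definition differential_surjective (m n : nat) (A : 'I_m -> 'M[C]_n)
  (psi : 'cV[C]_n) : Prop :=
  forall x : 'rV[R]_m, aff_direction A x ->
    exists X : 'M[C]_n, tangent_vec psi X /\ iota_star A X = x.

Definition regular_value (m n : nat) (A : 'I_m -> 'M[C]_n) (rho : 'rV[R]_m)
  : Prop :=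
  forall psi : 'cV[C]_n, unit_vec psi -> iota_star A (proj psi) = rho ->
    differential_surjective A psi.

End GFT.

(* Main.v *)
Require Import Defs.
From HB Require Import structures.
From mathcomp Require Import all_boot all_order all_algebra.
From mathcomp Require Import complex.
From mathcomp Require Import reals.
From mathcomp Require Import ring.
Set Implicit Arguments. Unset Strict Implicit. Unset Printing Implicit Defensive.
Import Order.TTheory GRing.Theory Num.Theory.
Local Open Scope ring_scope.

Section Aux.
Variable R : realType.
Local Notation C := (R[i]).

Lemma adjMc p q r (M : 'M[C]_(p, q)) (N : 'M[C]_(q, r)) :
  adj (M *m N) = adj N *m adj M.
Proof. by rewrite /adj map_mxM trmx_mul. Qed.

Lemma adjKc p q (M : 'M[C]_(p, q)) : adj (adj M) = M.
Proof. by apply/matrixP => i j; rewrite !mxE conjcK. Qed.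

Lemma adjDc p q (M N : 'M[C]_(p, q)) : adj (M + N) = adj M + adj N.
Proof. by apply/matrixP => i j; rewrite !mxE rmorphD. Qed.

Lemma adjBc p q (M N : 'M[C]_(p, q)) : adj (M - N) = adj M - adj N.
Proof. by apply/matrixP => i j; rewrite !mxE rmorphB. Qed.

Lemma adjZc p q c (M : 'M[C]_(p, q)) : adj (c *: M) = (c^*)%C *: adj M.
Proof. by apply/matrixP => i j; rewrite !mxE rmorphM. Qed.

Lemma adj1c p : adj (1%:M : 'M[C]_p) = 1%:M.
Proof. apply/matrixP => i j; rewrite !mxE eq_sym; case: (i == j); [exact: conjc1 | exact: conjc0]. Qed.

Lemma adj_sum p q (I : finType) (F : I -> 'M[C]_(p, q)) :
  adj (\sum_i F i) = \sum_i adj (F i).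
Proof.
apply/matrixP => i j; rewrite !mxE !summxE rmorph_sum; apply: eq_bigr => k _.
by rewrite !mxE.
Qed.

Lemma dotE n (x y : 'cV[C]_n) : (adj x *m y) 0 0 = \sum_j (x j 0)^*%C * y j 0.
Proof. by rewrite mxE; apply: eq_bigr => j _; rewrite !mxE. Qed.

Lemma hermitian_iota m n (A : 'I_m -> 'M[C]_n) (u : 'rV[R]_m) :
  (forall k, is_hermitian (A k)) -> is_hermitian (Defs.iota A u).
Proof.
move=> hA; rewrite /is_hermitian /Defs.iota adj_sum; apply: eq_bigr => k _.
by rewrite adjZc conjc_real hA.
Qed.


Lemma adj_tC p q (M : 'M[C]_(p, q)) : adj M = map_mx (@Num.conj C) (M^T).
Proof. by apply/matrixP => i j; rewrite !mxE. Qed.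

Lemma spectral_herm n (H : 'M[C]_n) : is_hermitian H ->
  exists (P : 'M[C]_n) (d : 'rV[C]_n),
   [/\ adj P *m P = 1%:M, P *m adj P = 1%:M,
       H = adj P *m diag_mx d *m P & forall j, complex.Im (d 0 j) = 0].
Proof.
move=> hH.
have Hh : H \is hermsymmx.
  by apply/is_hermitianmxP; rewrite expr0 scale1r -adj_tC hH.
have Pu := spectral_unitarymx H.
have /orthomx_spectralP E := hermitian_normalmx Hh.
have Hr := hermitian_spectral_diag_real Hh.
move: (spectralmx H) (spectral_diag H) Pu E Hr => P d Pu E Hr.
have PP : P *m adj P = 1%:M.
  by rewrite adj_tC; apply/unitarymxP.
have PP' : adj P *m P = 1%:M.
  by rewrite adj_tC -(invmx_unitary Pu) mulVmx // unitarymx_unit.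
exists P, d; split => //; last first.
  move=> j; have /mxOverP/(_ 0 j) := Hr.
  by move/RIm_real => [].
rewrite (adj_tC P).
rewrite -(invmx_unitary Pu).
exact E.
Qed.



End Aux.

Section Aux2.
Variable R : realType.
Local Notation C := (R[i]).

Lemma colM p q r (A : 'M[C]_(p, q)) (B : 'M[C]_(q, r)) j :
  col j (A *m B) = A *m col j B.
Proof. by apply/matrixP => a b; rewrite !mxE; apply: eq_bigr => k _; rewrite !mxE. Qed.

Lemma diag_col1 n (d : 'rV[C]_n) j :
  diag_mx d *m col j 1%:M = d 0 j *: col j 1%:M.
Proof.
apply/matrixP => a b; rewrite mul_diag_mx !mxE.
by case: (eqVneq a j) => [->|]; rewrite ?mulr0n ?mulr0 ?mulr1n ?mulr1.
Qed.
Lemma VP n (H : 'M[C]_n) (lam : C) : is_hermitian H ->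
 (forall (mu : C) (phi : 'cV[C]_n), phi != 0 -> H *m phi = mu *: phi -> lam <= mu) ->
 forall x : 'cV[C]_n,
  lam * (adj x *m x) 0 0 <= (adj x *m H *m x) 0 0 /\
  (complex.Re ((adj x *m H *m x) 0 0) <= complex.Re (lam * (adj x *m x) 0 0) ->
     H *m x = lam *: x).
Proof.
move=> hH hmin x.
have [P [d [h1 h2 hE _]]] := spectral_herm hH.
have dge : forall j, lam <= d 0 j.
  move=> j; apply: (hmin _ (col j (adj P))).
    apply/eqP => /(congr1 (mulmx P)); rewrite -colM h2 mulmx0.
    move/matrixP/(_ j 0); rewrite !mxE eqxx /= => /eqP.
    by rewrite oner_eq0.
  by rewrite hE -!mulmxA -colM h2 diag_col1 -scalemxAr -colM mulmx1.
set y := P *m x.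
have xE : x = adj P *m y by rewrite /y mulmxA h1 mul1mx.
have axE : adj x = adj y *m P by rewrite xE adjMc adjKc.
clearbody y.
have e1 : adj x *m H *m x = adj y *m (diag_mx d *m y).
  rewrite axE xE hE !mulmxA -[adj y *m P *m adj P]mulmxA h2 mulmx1.
  by rewrite -[adj y *m diag_mx d *m P *m adj P]mulmxA h2 mulmx1.
have e2 : adj x *m x = adj y *m y.
  by rewrite axE xE -mulmxA [P *m (_ *m _)]mulmxA h2 mul1mx.
have e3 : (adj x *m H *m x) 0 0 - lam * (adj x *m x) 0 0 =
   \sum_j (d 0 j - lam) * ((y j 0)^*%C * y j 0).
  rewrite e1 e2 !dotE mulr_sumr -sumrB; apply: eq_bigr => j _.
  rewrite mul_diag_mx mxE; ring.
have s_ge0 : 0 <= \sum_j (d 0 j - lam) * ((y j 0)^*%C * y j 0).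
  apply: sumr_ge0 => j _; apply: mulr_ge0; first by rewrite subr_ge0.
  by rewrite mulrC; apply: mulcJ_ge0.
split; first by rewrite -subr_ge0 e3.
move=> hre.
have s0 : \sum_j (d 0 j - lam) * ((y j 0)^*%C * y j 0) = 0.
  move: s_ge0; rewrite -e3 lecE /= => /andP [/eqP him hre'].
  have : complex.Re ((adj x *m H *m x) 0 0 - lam * (adj x *m x) 0 0) = 0.
    apply/eqP; rewrite eq_le hre' andbT.
    by rewrite raddfB /= subr_le0.
  move: him; case: ((adj x *m H *m x) 0 0 - lam * (adj x *m x) 0 0) => a b /= -> ->.
  by [].
have t0 : forall j, (d 0 j - lam) * y j 0 = 0.
  move=> j; move/eqP: s0; rewrite psumr_eq0 => [/allP /(_ j)|].
    rewrite mem_index_enum => /(_ isT); rewrite /= mulf_eq0 => /orP [/eqP -> | ].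
      by rewrite mul0r.
    by rewrite mulf_eq0 conjc_eq0 orbb => /eqP ->; rewrite mulr0.
  move=> k _; apply: mulr_ge0; first by rewrite subr_ge0.
  by rewrite mulrC; apply: mulcJ_ge0.
rewrite xE hE -!mulmxA [P *m (adj P *m y)]mulmxA h2 mul1mx.
rewrite scalemxAr; congr (_ *m _).
apply/matrixP => a b; rewrite ord1 mul_diag_mx !mxE.
by apply/eqP; rewrite -subr_eq0 -mulrBl t0.
Qed.

End Aux2.

Local Open Scope complex_scope.
Section Aux3.
Variable R : realType.
Local Notation C := (R[i]).

Definition EE n (M : 'M[C]_n) (x : 'cV[C]_n) : C := (adj x *m M *m x) 0 0.
Definition dot m (u r : 'rV[R]_m) : R := \sum_k u 0 k * r 0 k.

Lemma tr_proj n (M : 'M[C]_n) x : \tr (M *m proj x) = EE M x.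
Proof.
by rewrite /proj /EE mulmxA mxtrace_mulC mulmxA /mxtrace big_ord1.
Qed.

Lemma Re_sum (I : finType) (F : I -> C) :
  complex.Re (\sum_i F i) = \sum_i complex.Re (F i).
Proof.
apply: (big_morph (@complex.Re R)); last by [].
by case=> a b [c d].
Qed.

Lemma Re_rM (r : R) (z : C) : complex.Re (r%:C * z) = r * complex.Re z.
Proof. by case: z => a b /=; rewrite mul0r subr0. Qed.

Lemma dot_iota_star m n (A : 'I_m -> 'M[C]_n) (u : 'rV[R]_m) G :
  dot u (iota_star A G) = complex.Re (\tr (Defs.iota A u *m G)).
Proof.
rewrite /dot /Defs.iota mulmx_suml.
rewrite (big_morph _ (@mxtraceD _ _) (@mxtrace0 _ _)) Re_sum; apply: eq_bigr => k _.
by rewrite -scalemxAl mxtraceZ Re_rM mxE.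
Qed.

Lemma dotB m (u r1 r2 : 'rV[R]_m) : dot u (r1 - r2) = dot u r1 - dot u r2.
Proof.
rewrite /dot -sumrB; apply: eq_bigr => k _; by rewrite !mxE mulrBr.
Qed.

Lemma iotaB m n (A : 'I_m -> 'M[C]_n) (u1 u2 : 'rV[R]_m) :
  Defs.iota A (u1 - u2) = Defs.iota A u1 - Defs.iota A u2.
Proof.
rewrite /Defs.iota -sumrB; apply: eq_bigr => k _.
by rewrite !mxE rmorphB scalerBl.
Qed.

Lemma EED n (M N : 'M[C]_n) x : EE (M + N) x = EE M x + EE N x.
Proof. by rewrite /EE mulmxDr mulmxDl mxE. Qed.

Lemma EE_eig n (M : 'M[C]_n) x (mu : C) :
  unit_vec x -> M *m x = mu *: x -> EE M x = mu.
Proof.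
move=> hx hM; rewrite /EE -mulmxA hM -scalemxAr hx mxE mxE eqxx /=.
by rewrite mulr1.
Qed.

Lemma unit00 n (x : 'cV[C]_n) : unit_vec x -> (adj x *m x) 0 0 = 1.
Proof. by move=> hx; rewrite hx mxE eqxx. Qed.

Lemma tr_tangent n (D : 'M[C]_n) psi (mu : C) X :
  is_hermitian D -> D *m psi = mu *: psi -> tangent_vec psi X -> \tr (D *m X) = 0.
Proof.
move=> hD hDp [phi [hort ->]].
have e1 : adj psi *m D = adj (mu *: psi) by rewrite -hDp adjMc hD.
have e2 : adj phi *m psi = 0.
  by rewrite -[psi]adjKc -adjMc hort; apply/matrixP => a b; rewrite !mxE conjc0.
rewrite mulmxDr mxtraceD !mulmxA hDp.
rewrite [\tr (D *m phi *m adj psi)]mxtrace_mulC [\tr (mu *: psi *m adj phi)]mxtrace_mulC.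
rewrite mulmxA e1 adjZc -scalemxAl hort scaler0 -scalemxAr e2 scaler0.
by rewrite mxtrace0 addr0.
Qed.

End Aux3.

Local Close Scope complex_scope.

Section Aux4.
Variable R : realType.
Local Notation C := (R[i]).

Lemma ReD (a b : C) : complex.Re (a + b) = complex.Re a + complex.Re b.
Proof. by case: a => ? ?; case: b => ? ?. Qed.

Lemma adj_col n (M : 'M[C]_n) j : adj (col j M) = row j (adj M).
Proof. by apply/matrixP => a b; rewrite !mxE. Qed.

Lemma herm_const n (D : 'M[C]_n) : is_hermitian D ->
  (forall x1 x2, unit_vec x1 -> unit_vec x2 ->
     complex.Re (EE D x1) = complex.Re (EE D x2)) ->
  exists c : C, D = c%:M.
Proof.
move=> hD hc; have [P [d [h1 h2 hE hIm]]] := spectral_herm hD.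
case: n D P d h1 h2 hE hIm hc {hD} => [|n] D P d h1 h2 hE hIm hc.
  by exists 0; apply/matrixP => [[]].
have eig j : D *m col j (adj P) = d 0 j *: col j (adj P).
  by rewrite hE -!mulmxA -colM h2 diag_col1 -scalemxAr -colM mulmx1.
have un j : unit_vec (col j (adj P)).
  rewrite /unit_vec adj_col adjKc -colM -row_mul h2.
  by apply/matrixP => a b; rewrite !ord1 !mxE eqxx.
have Ed j : EE D (col j (adj P)) = d 0 j := EE_eig (un j) (eig j).
have dj j : d 0 j = d 0 ord0.
  have := hc _ _ (un j) (un ord0); rewrite !Ed.
  move: (hIm j) (hIm ord0).
  by case: (d 0 j) => a b; case: (d 0 ord0) => a' b' /= -> -> ->.
exists (d 0 ord0); rewrite hE.
have -> : diag_mx d = (d 0 ord0)%:M.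
  by apply/matrixP => a b; rewrite !mxE dj.
by rewrite mul_mx_scalar -scalemxAl h1 scalemx1.
Qed.

End Aux4.

Theorem proposition2p19 (R : realType) (m n : nat)
  (A : 'I_m -> 'M[R[i]]_n) (W : 'M[R[i]]_n) (rho : 'rV[R]_m) :
  (forall k, is_hermitian (A k)) -> is_hermitian W ->
  pure_v_representable A W rho ->
  regular_value A rho ->
  uniquely_v_representable A W rho.
Proof.
move=> hA hW [v [G [[psi [lam [hpsi hG hev hmin]]] hrho]]] hreg.
have hH : is_hermitian (Defs.iota A v + W).
  by rewrite /is_hermitian adjDc (hermitian_iota _ hA) hW.
exists v; split; first by exists G; split => //; exists psi, lam.
move=> v' [G' [[psi' [lam' [hpsi' hG' hev' hmin']]] hrho']].
have hH' : is_hermitian (Defs.iota A v' + W).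
  by rewrite /is_hermitian adjDc (hermitian_iota _ hA) hW.
subst G G'.
have key u x : complex.Re (EE (Defs.iota A u + W) x) =
    complex.Re (EE W x) + dot u (iota_star A (proj x)).
  by rewrite EED ReD addrC dot_iota_star tr_proj.
have [vp1 _] := VP hH hmin psi'.
move: vp1; rewrite unit00 // mulr1 lecE => /andP [_ le1].
have Epsi : EE (Defs.iota A v + W) psi = lam := EE_eig hpsi hev.
have le2 : complex.Re (EE W psi) <= complex.Re (EE W psi').
  have : complex.Re (EE (Defs.iota A v + W) psi) <=
         complex.Re (EE (Defs.iota A v + W) psi') by rewrite Epsi.
  by rewrite !key -hrho' -hrho lerD2r.
have [_ vp2] := VP hH' hmin' psi.
have hev2 : (Defs.iota A v' + W) *m psi = lam' *: psi.
  apply: vp2; rewrite unit00 // mulr1.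
  change (complex.Re (EE (Defs.iota A v' + W) psi) <= complex.Re lam').
  rewrite -(EE_eig hpsi' hev') !key -hrho' -hrho lerD2r; exact: le2.
have a1 : Defs.iota A v' *m psi = lam' *: psi - W *m psi.
  by rewrite -hev2 mulmxDl addrK.
have a2 : Defs.iota A v *m psi = lam *: psi - W *m psi.
  by rewrite -hev mulmxDl addrK.
have hD : Defs.iota A (v' - v) *m psi = (lam' - lam) *: psi.
  by rewrite iotaB mulmxBl a1 a2 scalerBl opprB addrA subrK.
have hDh : is_hermitian (Defs.iota A (v' - v)) := hermitian_iota _ hA.
have hdiff := hreg psi hpsi (esym hrho).
have const x1 x2 : unit_vec x1 -> unit_vec x2 ->
    complex.Re (EE (Defs.iota A (v' - v)) x1) =
    complex.Re (EE (Defs.iota A (v' - v)) x2).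
  move=> u1 u2.
  have [X [hX hXr]] := hdiff (iota_star A (proj x1) - iota_star A (proj x2)) 
     (ex_intro _ 1%N (ex_intro _ (fun=> 1) (ex_intro _ (fun=> proj x1)
       (ex_intro _ (fun=> proj x2) (conj (fun i => conj (ex_intro _ x1 (conj u1 erefl))
          (ex_intro _ x2 (conj u2 erefl))) (esym (etrans (big_ord1 _ _) (scale1r _)))))))).
  have := dot_iota_star A (v' - v) X.
  rewrite hXr (tr_tangent hDh hD hX) dotB !dot_iota_star !tr_proj.
  by move/eqP; rewrite subr_eq0 => /eqP.
have [c hc] := herm_const hDh const.
by exists c; rewrite -iotaB.
Qed.
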